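(* For any $\rho>0$ and $n\in\mathbb{N}$, the following randomized test $\texttt{DPBern}$ satisfies $\rho$-zCDP (with respect to datasets of $n$ rows $(x_i,y_i)\in\mathbb{R}^2$, $n$ public). Input: data $(x_1,y_1),\dots,(x_n,y_n)$, $\rho>0$, and a significance level $\alpha\in(0,1)$. Choose a uniformly random permutation $\tau$ of $[n]$, let $n_s=\lfloor n/2\rfloor$ and $s=0$. For $i=1,\dots,n_s$: if $x_{\tau(n_s+i)}\ne x_{\tau(i)}$, add $\mathbb{1}\{(y_{\tau(n_s+i)}-y_{\tau(i)})/(x_{\tau(n_s+i)}-x_{\tau(i)})>0\}$ to $s$; otherwise add an independent $\mathrm{Bern}(1/2)$ sample to $s$. Then replace $s$ by $s+\mathcal{N}(0,\frac1{2\rho})$. Let $N_{\alpha/2},N_{1-\alpha/2}$ be the $\alpha/2$ and $1-\alpha/2$ quantiles of $\mathcal{N}(n_s/2,\ n_s/4+\frac1{2\rho})$. Output ''reject the null'' if $s\notin(N_{\alpha/2},N_{1-\alpha/2})$ and ''fail to reject the null'' otherwise.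
   Context: Two datasets of $n$ rows are neighboring if they differ in exactly one row. A randomized mechanism $\mathcal{M}$ satisfies $\rho$-zCDP if for all neighboring datasets $\mathbf{x},\mathbf{x}'$ and all $\alpha'\in(1,\infty)$, $D_{\alpha'}(\mathcal{M}(\mathbf{x})\|\mathcal{M}(\mathbf{x}'))\le\rho\alpha'$, where $D_{\alpha'}$ is the Rényi divergence of order $\alpha'$. *)

(* Defs.v *)
From HB Require Import structures.
From mathcomp Require Import all_boot all_order all_algebra all_fingroup.
From mathcomp Require Import all_classical all_reals all_analysis.
Set Implicit Arguments. Unset Strict Implicit. Unset Printing Implicit Defensive.
Import Order.TTheory GRing.Theory Num.Theory.
Local Open Scope classical_set_scope.
Local Open Scope ring_scope.

Section DPBern.
Variable R : realType.

Definition dataset (n : nat) := {ffun 'I_n -> R * R}.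

Definition neighboring (n : nat) (x x' : dataset n) : bool :=
  #|[set i | x i != x' i]| == 1%N.

Definition renyi_div (O : finType) (a : R) (P Q : O -> R) : \bar R :=
  if [exists o, (Q o == 0) && (P o != 0)] then +oo%E
  else ((a - 1)^-1 * ln (\sum_(o | P o != 0) P o `^ a * Q o `^ (1 - a)))%:E.

Definition zCDP (O : finType) (n : nat) (rho : R) (M : dataset n -> O -> R) : Prop :=
  forall x x' : dataset n, neighboring x x' ->
  forall a : R, 1 < a -> (renyi_div a (M x) (M x') <= (rho * a)%:E)%E.

(** Indices tau(i) and tau(n_s + i) (0-based, i < n_s = floor(n/2)). *)
Lemma half_lt_nat (n i : nat) : (i < n./2)%N -> (i < n)%N /\ (n./2 + i < n)%N.
Proof.
move=> h; have e := odd_double_half n; rewrite -addnn in e.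
split.
  rewrite -e; apply: (leq_trans h); rewrite addnA; exact: leq_addl.
rewrite -[X in (_ < X)%N]e addnA (addnC (odd n)) -addnA ltn_add2l.
apply: (leq_trans h); exact: leq_addl.
Qed.

Lemma half_lt_l (n : nat) (i : 'I_n./2) : (i < n)%N.
Proof. exact: (half_lt_nat (ltn_ord i)).1. Qed.

Lemma half_lt_r (n : nat) (i : 'I_n./2) : (n./2 + i < n)%N.
Proof. exact: (half_lt_nat (ltn_ord i)).2. Qed.

Definition idx_l (n : nat) (i : 'I_n./2) : 'I_n := Ordinal (half_lt_l i).
Definition idx_r (n : nat) (i : 'I_n./2) : 'I_n := Ordinal (half_lt_r i).

Definition bern_stat (n : nat) (x : dataset n) (tau : {perm 'I_n})
    (c : {ffun 'I_n./2 -> bool}) : nat :=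
  (\sum_(i < n./2)
    (let a := x (tau (idx_l i)) in let b := x (tau (idx_r i)) in
     if b.1 != a.1 then ((0 < (b.2 - a.2) / (b.1 - a.1))%R : nat) else (c i : nat)))%N.

Definition normal_quantile (m sd p : R) : R :=
  inf [set t : R | (p%:E <= normal_prob m sd `]-oo, t])%E].

Definition DPBern_reject_prob (rho alpha : R) (n : nat) (x : dataset n) : R :=
  let ns := n./2 in
  let sd_noise := Num.sqrt (1 / (2 * rho)) in
  let sd_null := Num.sqrt (ns%:R / 4 + 1 / (2 * rho)) in
  let lo := normal_quantile (ns%:R / 2) sd_null (alpha / 2) in
  let hi := normal_quantile (ns%:R / 2) sd_null (1 - alpha / 2) in
  (#|{perm 'I_n}|%:R)^-1 * (2 ^+ ns)^-1 *
  \sum_(tau : {perm 'I_n}) \sum_(c : {ffun 'I_ns -> bool})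
     fine (normal_prob (bern_stat x tau c)%:R sd_noise (~` `]lo, hi[)).

(** Output distribution of DPBern: true = "reject the null",
    false = "fail to reject the null". *)
Definition DPBern (rho alpha : R) (n : nat) (x : dataset n) (o : bool) : R :=
  if o then DPBern_reject_prob rho alpha x else 1 - DPBern_reject_prob rho alpha x.

End DPBern.

(* Main.v *)
Require Import Defs.
From HB Require Import structures.
From mathcomp Require Import all_boot all_order all_algebra all_fingroup.
From mathcomp Require Import all_classical all_reals all_analysis.
From mathcomp Require Import ring lra zify.
Import Order.TTheory GRing.Theory Num.Theory.
Local Open Scope classical_set_scope.
Local Open Scope ring_scope.
Set Implicit Arguments. Unset Strict Implicit.

Section aux.
Variable R : realType.
Lemma eqle (x y : R) : x = y -> x <= y. Proof. by move->. Qed.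
Lemma bern_exp (a W : R) : 1 < a -> a * expR ((a - 1) * W) <= 1 + (a - 1) * expR (a * W).
Proof.
move=> a1.
set G := expR ((a - 1) * W).
have e1 : 1 = G * expR (- ((a - 1) * W)) by rewrite /G -expRD subrr expR0.
have e2 : expR (a * W) = G * expR W by rewrite /G -expRD; congr expR; ring.
have h1 := expR_ge1Dx (- ((a - 1) * W)).
have h2 := expR_ge1Dx W.
have G0 : 0 < G by exact: expR_gt0.
rewrite [X in X + _]e1 e2.
have : G * (1 + - ((a - 1) * W)) + (a - 1) * (G * (1 + W)) <=
       G * expR (- ((a - 1) * W)) + (a - 1) * (G * expR W).
  apply: lerD; first by apply: ler_wpM2l; [exact: ltW|exact: h1].
  by apply: ler_wpM2l; [rewrite subr_ge0 ltW|apply: ler_wpM2l; [exact: ltW|exact: h2]].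
apply: le_trans; apply: eqle; ring.
Qed.

Lemma tangent_exp (a T U V : R) : 1 < a ->
  (1 - a) * expR (a * T + V) + a * expR ((a - 1) * T + U) <= expR (a * U + (1 - a) * V).
Proof.
move=> a1.
set M := a * U + (1 - a) * V.
set W := T - U + V.
have e1 : expR (a * T + V) = expR M * expR (a * W) by rewrite -expRD; congr expR; rewrite /M /W; ring.
have e2 : expR ((a - 1) * T + U) = expR M * expR ((a - 1) * W) by rewrite -expRD; congr expR; rewrite /M /W; ring.
rewrite e1 e2.
have h := @bern_exp a W a1.
have M0 : 0 < expR M by exact: expR_gt0.
have : expR M * (a * expR ((a - 1) * W) - (a - 1) * expR (a * W)) <= expR M * 1.
  by apply: ler_wpM2l; [exact: ltW|rewrite lerBlDr].
rewrite mulr1; apply: le_trans; apply: eqle; ring.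
Qed.



Lemma pdf_expE (m s x : R) : s != 0 -> normal_pdf m s x = expR (ln (normal_peak s) + - (x - m) ^+ 2 / (s ^+ 2 *+ 2)).
Proof.
move=> s0; rewrite /normal_pdf (negbTE s0) /= expRD lnK //.
by rewrite posrE normal_peak_gt0.
Qed.

Lemma pdf_tangent (a s T m m' x : R) : 1 < a -> s != 0 ->
  (1 - a) * expR (a * T) * normal_pdf m' s x + a * expR ((a - 1) * T) * normal_pdf m s x
  <= expR (a * (a - 1) * (m - m') ^+ 2 / (s ^+ 2 *+ 2)) * normal_pdf (a * m + (1 - a) * m') s x.
Proof.
move=> a1 s0; rewrite !pdf_expE //.
set c := ln (normal_peak s).
have D0 : s ^+ 2 *+ 2 != 0 by rewrite mulrn_eq0 /= sqrf_eq0.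
rewrite -!mulrA -!expRD.

apply: le_trans (@tangent_exp a T (c + - (x - m) ^+ 2 / (s ^+ 2 *+ 2)) (c + - (x - m') ^+ 2 / (s ^+ 2 *+ 2)) a1) _.
apply: eqle; congr expR; field; exact: s0.
Qed.

Definition pr (m s : R) (B : set R) := \int[lebesgue_measure]_(x in B) normal_pdf m s x.

Lemma int_pdf (m s : R) (B : set R) : measurable B ->
  lebesgue_measure.-integrable B (EFin \o normal_pdf m s).
Proof.
move=> mB; have h := integrable_normal_pdf m s.
exact: (@integrableS _ _ _ lebesgue_measure setT B _ measurableT mB (@subsetT _ B) h).
Qed.

Lemma int_Zpdf (k m s : R) (B : set R) : measurable B ->
  lebesgue_measure.-integrable B (EFin \o (fun x => k * normal_pdf m s x)).
Proof.
move=> mB; have h := (@integrableZl _ _ _ lebesgue_measure B mB k _ (int_pdf m s mB)).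
eapply (@eq_integrable _ _ _ lebesgue_measure B mB); last exact: h.
by move=> x _ /=; rewrite EFinM.
Qed.

Lemma int_D (f g : R -> R) (B : set R) : measurable B ->
  lebesgue_measure.-integrable B (EFin \o f) ->
  lebesgue_measure.-integrable B (EFin \o g) ->
  lebesgue_measure.-integrable B (EFin \o (fun x => f x + g x)).
Proof.
move=> mB i1 i2; apply: (@eq_integrable _ _ _ lebesgue_measure B mB _ _ _ (@integrableD _ _ _ lebesgue_measure B mB _ _ i1 i2)).
by move=> x _ /=; rewrite EFinD.
Qed.

Lemma pr_tangent (a s T m m' : R) (B : set R) : 1 < a -> s != 0 -> measurable B ->
  (1 - a) * expR (a * T) * pr m' s B + a * expR ((a - 1) * T) * pr m s B
  <= expR (a * (a - 1) * (m - m') ^+ 2 / (s ^+ 2 *+ 2)) * pr (a * m + (1 - a) * m') s B.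
Proof.
move=> a1 s0 mB; rewrite /pr -!RintegralZl //; try exact: int_pdf.
rewrite -RintegralD //; try exact: int_Zpdf.
apply: le_Rintegral => //; try exact: int_Zpdf.
  by apply: int_D => //; exact: int_Zpdf.
by move=> x _; exact: pdf_tangent.
Qed.

Lemma pr_ge0 m s B : 0 <= pr m s B.
Proof. by apply: Rintegral_ge0 => x _; exact: normal_pdf_ge0. Qed.

Lemma pr_C m s B : measurable B -> pr m s (~` B) = 1 - pr m s B.
Proof.
move=> mB; rewrite /pr.
change (fine (normal_prob m s (~` B)) = 1 - fine (normal_prob m s B)).
rewrite (probability_setC (normal_prob m s) mB) fineB //.
have h1 := probability_le1 (normal_prob m s) mB.
have h0 : (0 <= normal_prob m s B)%E by [].
by rewrite ge0_fin_numE // (le_lt_trans h1) // ltry.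
Qed.



Lemma powRE' (x b : R) : x != 0 -> x `^ b = expR (b * ln x).
Proof. by move=> x0; rewrite /powR (negbTE x0). Qed.

Lemma key_real (a S P Q : R) : 1 < a -> 0 <= S -> 0 <= P -> 0 <= Q ->
  (forall T, (1 - a) * expR (a * T) * Q + a * expR ((a - 1) * T) * P <= S) ->
  P != 0 -> Q != 0 /\ P `^ a * Q `^ (1 - a) <= S.
Proof.
move=> a1 S0 P0 Q0 h Pn0.
have Pp : 0 < P by rewrite lt0r Pn0.
have a0 : 0 < a - 1 by rewrite subr_gt0.
have [Qz|Qn0] := eqVneq Q 0.
  exfalso.
  set T := ln ((S + 1) / (a * P)) / (a - 1).
  have hT := h T.
  have e : expR ((a - 1) * T) = (S + 1) / (a * P).
    rewrite /T mulrC -mulrA mulVf ?gt_eqF // mulr1 lnK // posrE.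
    by rewrite divr_gt0 // ?mulr_gt0 // ?(lt_trans _ a1) // ltr_wpDl.
  move: hT; rewrite e Qz mulr0 add0r.
  have -> : a * ((S + 1) / (a * P)) * P = S + 1.
    by field; apply/andP; split; rewrite gt_eqF // (lt_trans _ a1).
  by move=> hh; lra.
split => //.
have Qp : 0 < Q by rewrite lt0r Qn0.
have := h (ln (P / Q)).
rewrite powRE' // powRE' //.
rewrite ln_div ?posrE //.
have eQ : Q = expR (ln Q) by rewrite lnK // posrE.
have eP : P = expR (ln P) by rewrite lnK // posrE.
rewrite -expRD.
have e1 : expR (a * (ln P - ln Q)) * Q = expR (a * ln P + (1 - a) * ln Q).
  by rewrite {2}eQ -expRD; congr expR; ring.
have e2 : expR ((a - 1) * (ln P - ln Q)) * P = expR (a * ln P + (1 - a) * ln Q).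
  by rewrite {2}eP -expRD; congr expR; ring.
rewrite -mulrA e1 -mulrA e2.
apply: le_trans; apply: eqle; ring.
Qed.

End aux.


Section gen.
Variables (R : realType) (I : finType) (w : I -> R) (s1 s2 : I -> R) (sg a rho : R).
Hypotheses (w0 : forall i, 0 <= w i) (w1 : \sum_i w i = 1)
  (d1 : forall i, (s1 i - s2 i) ^+ 2 <= 1) (sg0 : sg != 0)
  (sgr : sg ^+ 2 *+ 2 = rho^-1) (a1 : 1 < a) (rho0 : 0 < rho).

Let K i := expR (a * (a - 1) * (s1 i - s2 i) ^+ 2 / (sg ^+ 2 *+ 2)).
Let mm i := a * s1 i + (1 - a) * s2 i.
Let PB B := \sum_i w i * pr (s1 i) sg B.
Let QB B := \sum_i w i * pr (s2 i) sg B.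
Let SB B := \sum_i w i * K i * pr (mm i) sg B.

Lemma agg (B : set R) : measurable B -> forall T,
  (1 - a) * expR (a * T) * QB B + a * expR ((a - 1) * T) * PB B <= SB B.
Proof.
move=> mB T; rewrite /QB /PB /SB !big_distrr -big_split /=.
apply: ler_sum => i _.
have h := @pr_tangent R a sg T (s1 i) (s2 i) B a1 sg0 mB.
have h2 := ler_wpM2l (w0 i) h.
apply: le_trans (le_trans h2 _); apply: eqle; rewrite /K /mm; ring.
Qed.

Lemma PB_ge0 B : 0 <= PB B.
Proof. by apply: sumr_ge0 => i _; rewrite mulr_ge0 // pr_ge0. Qed.
Lemma QB_ge0 B : 0 <= QB B.
Proof. by apply: sumr_ge0 => i _; rewrite mulr_ge0 // pr_ge0. Qed.
Lemma SB_ge0 B : 0 <= SB B.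
Proof. by apply: sumr_ge0 => i _; rewrite !mulr_ge0 // ?pr_ge0 ?expR_ge0. Qed.

Lemma SB_sum A : measurable A -> SB A + SB (~` A) <= expR (a * (a - 1) * rho).
Proof.
move=> mA; rewrite /SB -big_split /=.
have -> : \sum_i (w i * K i * pr (mm i) sg A + w i * K i * pr (mm i) sg (~` A))
    = \sum_i w i * K i.
  by apply: eq_bigr => i _; rewrite pr_C //; ring.
have c0 : 0 <= a * (a - 1) * rho.
  by rewrite !mulr_ge0 // ?subr_ge0 ?ltW // (lt_trans _ a1).
apply: (@le_trans _ _ (\sum_i w i * expR (a * (a - 1) * rho))).
  apply: ler_sum => i _; apply: ler_wpM2l => //; rewrite /K ler_expR sgr.
  have -> : a * (a - 1) * (s1 i - s2 i) ^+ 2 / rho^-1 = (a * (a - 1) * rho) * (s1 i - s2 i) ^+ 2.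
    by rewrite invrK; ring.
  by rewrite -[X in _ <= X]mulr1; apply: ler_wpM2l.
by rewrite -big_distrl /= w1 mul1r.
Qed.

Lemma renyi_gen (A : set R) (Pf Qf : bool -> R) : measurable A ->
  (forall o, Pf o = PB (if o then A else ~` A)) ->
  (forall o, Qf o = QB (if o then A else ~` A)) ->
  (renyi_div a Pf Qf <= (rho * a)%:E)%E.
Proof.
move=> mA hP hQ.
have mB : forall o : bool, measurable (if o then A else ~` A).
  by case => //; exact: measurableC.
have kr : forall o, Pf o != 0 -> Qf o != 0 /\ Pf o `^ a * Qf o `^ (1 - a) <= SB (if o then A else ~` A).
  move=> o; rewrite hP hQ; apply: key_real => //; [exact: SB_ge0|exact: PB_ge0|exact: QB_ge0|].
  exact: agg.
rewrite /renyi_div; case: ifP => [H | _].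
  case/existsP: H => o /andP [/eqP Q0 P0].
  by have := (kr o P0).1; rewrite Q0 eqxx.
rewrite lee_fin.
set Sum := \sum_(o | Pf o != 0) _.
have Sle : Sum <= expR (a * (a - 1) * rho).
  apply: le_trans (SB_sum mA); rewrite /Sum big_mkcond big_bool /=.
  apply: lerD.
    by case: ifP => [h|_]; [exact: (kr true h).2|exact: SB_ge0].
  by case: ifP => [h|_]; [exact: (kr false h).2|exact: SB_ge0].
have a0 : 0 < a - 1 by rewrite subr_gt0.
have [S0|Sp] := lerP Sum 0.
  rewrite ln0 // mulr0; apply: mulr_ge0; [exact: ltW | apply: ltW; exact: (lt_trans _ a1)].
have : ln Sum <= a * (a - 1) * rho.
  by rewrite -[X in _ <= X]expRK ler_ln ?posrE ?expR_gt0.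
have ia : 0 <= (a - 1)^-1 by rewrite invr_ge0 ltW.
move=> hl; have := ler_wpM2l ia hl.
move=> h2; apply: le_trans h2 _; apply: eqle; field; rewrite gt_eqF //.
Qed.

End gen.

Lemma sum_diff1 (I : finType) (f g : I -> nat) :
  (forall i, f i <= 1)%N ->
  (forall i1 i2, f i1 != g i1 -> f i2 != g i2 -> i1 = i2) ->
  (\sum_i f i <= \sum_i g i + 1)%N.
Proof.
move=> f1 uq.
case: (pickP (fun i => f i != g i)) => [i0 Hi0 | none].
  rewrite (bigD1 i0) //= [X in (_ <= X + _)%N](bigD1 i0) //=.
  have -> : (\sum_(i | i != i0) f i = \sum_(i | i != i0) g i)%N.
    apply: eq_bigr => i Hi; apply/eqP; apply: contraNT Hi => Hd.
    by rewrite (uq _ _ Hd Hi0) eqxx.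
  have := f1 i0; lia.
rewrite (eq_bigr g) ?leq_addr // => i _.
by have := none i; move/negbFE/eqP.
Qed.

Section stat.
Variable R : realType.

Lemma stat_diff (n : nat) (x x' : dataset R n) (tau : {perm 'I_n}) (c : {ffun 'I_n./2 -> bool}) :
  (exists j, forall k, x k != x' k -> k = j) -> (bern_stat x tau c <= bern_stat x' tau c + 1)%N.
Proof.
move=> [j hx].
apply: sum_diff1.
  move=> i /=; case: ifP => _; last by case: (c i).
  by case: (0 < _).
have key : forall i,
  (let a := x (tau (idx_l i)) in let b := x (tau (idx_r i)) in
     if b.1 != a.1 then ((0 < (b.2 - a.2) / (b.1 - a.1))%R : nat) else (c i : nat)) !=
  (let a := x' (tau (idx_l i)) in let b := x' (tau (idx_r i)) in
     if b.1 != a.1 then ((0 < (b.2 - a.2) / (b.1 - a.1))%R : nat) else (c i : nat)) ->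
  tau (idx_l i) = j \/ tau (idx_r i) = j.
  move=> i; have [->|hl] := eqVneq (tau (idx_l i)) j; first by left.
  have [->|hr] := eqVneq (tau (idx_r i)) j; first by right.
  have el : x (tau (idx_l i)) = x' (tau (idx_l i)).
    by apply/eqP; apply: contraNT hl => /hx ->.
  have er : x (tau (idx_r i)) = x' (tau (idx_r i)).
    by apply/eqP; apply: contraNT hr => /hx ->.
  by rewrite /= el er eqxx.
move=> i1 i2 /key h1 /key h2.
have lr : forall i i' : 'I_n./2, idx_l i <> idx_r i'.
  move=> i i' /(congr1 val) /= e; have := ltn_ord i; rewrite e; lia.
case: h1 => h1; case: h2 => h2.
- by apply: val_inj; have := congr1 val (perm_inj (etrans h1 (esym h2))).
- by exfalso; apply: (lr i1 i2); apply: (@perm_inj _ tau); rewrite h1 h2.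
- by exfalso; apply: (lr i2 i1); apply: (@perm_inj _ tau); rewrite h1 h2.
- apply: val_inj; have := congr1 val (perm_inj (etrans h1 (esym h2))) => /= e.
  lia.
Qed.

Lemma nb_one (n : nat) (x x' : dataset R n) : neighboring x x' ->
  exists j, forall k, x k != x' k -> k = j.
Proof.
rewrite /neighboring => /card1P [j hj]; exists j.
move=> k hk; have : k \in [set i | x i != x' i] by rewrite in_setE.
by rewrite hj => /eqP.
Qed.
End stat.

Unset Implicit Arguments. Set Strict Implicit.
Local Close Scope classical_set_scope.

Theorem lemma4p2 (R : realType) (rho alpha : R) (n : nat) :
  0 < rho -> 0 < alpha < 1 ->
  zCDP rho (fun x : dataset R n => DPBern rho alpha x).
Proof.
move=> rho0 _ x x' hnb a a1.
set ns := n./2.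
set c0 : R := (#|{perm 'I_n}|%:R)^-1 * (2 ^+ ns)^-1.
set sg : R := Num.sqrt (1 / (2 * rho)).
set sdn : R := Num.sqrt (ns%:R / 4 + 1 / (2 * rho)).
set lo := normal_quantile (ns%:R / 2) sdn (alpha / 2).
set hi := normal_quantile (ns%:R / 2) sdn (1 - alpha / 2).
set A : set R := (~` `]lo, hi[)%classic.
have mA : measurable A by apply: measurableC; exact: measurable_itv.
pose I := ({perm 'I_n} * {ffun 'I_ns -> bool})%type.
pose w := fun _ : I => c0.
pose s1 := fun i : I => (bern_stat x i.1 i.2)%:R : R.
pose s2 := fun i : I => (bern_stat x' i.1 i.2)%:R : R.
have cp : (0 < #|{perm 'I_n}|)%N by apply/card_gt0P; exists 1%g.
have c00 : 0 <= c0 by rewrite mulr_ge0 // invr_ge0 // exprn_ge0.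
have w1 : \sum_(i : I) w i = 1.
  rewrite /w sumr_const card_prod card_ffun card_bool card_ord -mulr_natr natrM natrX /c0.
  field; apply/andP; split; first by rewrite expf_neq0.
  by rewrite pnatr_eq0 -lt0n.
have d1 : forall i, (s1 i - s2 i) ^+ 2 <= 1.
  move=> i; rewrite /s1 /s2.
  have [j hj] := nb_one hnb.
  have h1 := stat_diff i.1 i.2 (ex_intro _ j hj).
  have h3 : (bern_stat x' i.1 i.2 <= bern_stat x i.1 i.2 + 1)%N.
    by apply: stat_diff; exists j => k hk; apply: hj; rewrite eq_sym.
  have e1 : (bern_stat x i.1 i.2)%:R <= (bern_stat x' i.1 i.2)%:R + 1 :> R.
    by move: h1; rewrite -(ler_nat R) natrD.
  have e2 : (bern_stat x' i.1 i.2)%:R <= (bern_stat x i.1 i.2)%:R + 1 :> R.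
    by move: h3; rewrite -(ler_nat R) natrD.
  set u := (bern_stat x i.1 i.2)%:R : R.
  set v := (bern_stat x' i.1 i.2)%:R : R.
  nra.
have sg0 : sg != 0 by rewrite gt_eqF // sqrtr_gt0 divr_gt0 // mulr_gt0.
have sgr : sg ^+ 2 *+ 2 = rho^-1.
  rewrite sqr_sqrtr ?divr_ge0 // ?mulr_ge0 ?ltW //.
  rewrite -mulr_natr; field; by rewrite gt_eqF.
have hP : forall (y : dataset R n) (s : I -> R), (forall i, s i = (bern_stat y i.1 i.2)%:R) ->
   forall o, DPBern rho alpha y o = \sum_i w i * pr (s i) sg (if o then A else (~` A)%classic).
  move=> y s hs.
  have hT : DPBern_reject_prob rho alpha y = \sum_i w i * pr (s i) sg A.
    rewrite /DPBern_reject_prob /= pair_big /= big_distrr /=.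
    by apply: eq_bigr => i _; rewrite hs.
  case; rewrite /DPBern ?hT //.
  rewrite -w1 -sumrB; apply: eq_bigr => i _.
  rewrite (pr_C (s i) sg mA); ring.
apply: (renyi_gen (w := w) (s1 := s1) (s2 := s2) (sg := sg) _ w1 d1 sg0 sgr a1 rho0 mA).
- by move=> i; exact: c00.
- exact: hP.
- exact: hP.
Qed.
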